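(* On $V=\mathbb R$ with the standard metric, let $\phi(x)=e^{-1/x^2}$ for $x\neq0$, $\phi(0)=0$, and let $X=f(x)\partial_x$ with $f(x)=\frac{2}{x^3}e^{-1/x^2}$ for $x<0$, $f(0)=0$, $f(x)=\frac{1}{x^3}e^{-1/x^2}$ for $x>0$. Then there exists a continuous function $\delta:\mathbb R\to(0,\infty)$ with $d\phi(X)\ge\delta(|X|^2+|d\phi|^2)$ on $\mathbb R$, but there is no smooth $(2,0)$ tensor field $g$ on $\mathbb R$ with $g(v,v)>0$ for all $v\ne0$ and $d\phi=g(X,\cdot)$. *)

(* Defs.v *)
From Stdlib Require Import Reals Lra.
From Coquelicot Require Import Coquelicot.
Open Scope R_scope.

Definition phi (x : R) : R :=
  if Req_EM_T x 0 then 0 else exp (- (1 / x ^ 2)).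

(* coefficient of the vector field X = f(x) d/dx *)
Definition fX (x : R) : R :=
  if Rlt_dec x 0 then 2 / x ^ 3 * exp (- (1 / x ^ 2))
  else if Req_EM_T x 0 then 0
  else 1 / x ^ 3 * exp (- (1 / x ^ 2)).

Definition smooth (g : R -> R) : Prop :=
  forall (n : nat) (x : R), ex_derive_n g n x.

(* A (2,0) tensor field on R is given by its single component G:
   g_x(v, w) = G x * v * w. *)
Definition tensor20 (G : R -> R) (x v w : R) : R := G x * v * w.

(* Main.v *)
Require Import Defs.
From Stdlib Require Import Reals Lra.
From Coquelicot Require Import Coquelicot.
Open Scope R_scope.
Lemma dphi_nz x : x <> 0 -> is_derive phi x (2 / x ^ 3 * exp (- (1 / x ^ 2))).
Proof.
intros Hx.
apply (is_derive_ext_loc (fun y => exp (- (1 / y ^ 2)))).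
- assert (Hp : 0 < Rabs x) by (apply Rabs_pos_lt; auto).
  exists (mkposreal _ Hp). intros y Hy. unfold phi.
  destruct (Req_EM_T y 0) as [->|]; [|reflexivity].
  exfalso. unfold ball in Hy; simpl in Hy. unfold AbsRing_ball, abs, minus, plus, opp in Hy; simpl in Hy.
  rewrite Rplus_0_l, Rabs_Ropp in Hy. lra.
- auto_derive. auto. replace (1 * / (x * (x * 1))) with (1 / x ^ 2) by (simpl; field; auto). field. auto.
Qed.
Lemma dphi_0 : is_derive phi 0 0.
Proof.
apply is_derive_Reals. intros eps He. exists (mkposreal _ He). intros h Hh Hlt. simpl in Hlt.
unfold phi. destruct (Req_EM_T (0 + h) 0) as [E|_]. { lra. }
destruct (Req_EM_T 0 0) as [_|C]; [|lra].
rewrite Rplus_0_l.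
assert (h2 : 0 < h ^ 2) by (apply pow2_gt_0; auto).
assert (Hb : exp (- (1 / h ^ 2)) < h ^ 2).
{ rewrite exp_Ropp. assert (Hq : 0 < 1/h^2) by (apply Rdiv_lt_0_compat; lra). assert (H1 := exp_ineq1 (1 / h ^ 2) ltac:(lra)).
  assert (0 < exp (1 / h^2)) by apply exp_pos.
  apply (Rmult_lt_reg_l (exp (1 / h^2))); auto. rewrite Rinv_r by lra.
  assert (1 / h^2 * h^2 = 1) by (field; lra). nra. }
assert (Hp := exp_pos (- (1 / h ^ 2))).
set (E := exp (- (1 / h ^ 2))) in *.
replace ((E - 0) / h - 0) with (E / h) by (field; auto).
unfold Rdiv. rewrite Rabs_mult, Rabs_inv, (Rabs_pos_eq E) by lra.
assert (0 < Rabs h) by (apply Rabs_pos_lt; auto).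
assert (Hh2 : h^2 = Rabs h * Rabs h) by (rewrite <- Rabs_mult, Rabs_pos_eq; simpl; nra).
rewrite Hh2 in Hb.
apply (Rmult_lt_reg_r (Rabs h)); auto. rewrite Rmult_assoc, Rinv_l by lra. nra.
Qed.

Lemma fX_neg x : x < 0 -> fX x = 2 / x ^ 3 * exp (- (1 / x ^ 2)).
Proof. intros; unfold fX; destruct (Rlt_dec x 0); [reflexivity|lra]. Qed.
Lemma fX_pos x : 0 < x -> fX x = 1 / x ^ 3 * exp (- (1 / x ^ 2)).
Proof. intros; unfold fX; destruct (Rlt_dec x 0); [lra|]. destruct (Req_EM_T x 0); [lra|reflexivity]. Qed.
Lemma fX_0 : fX 0 = 0.
Proof. unfold fX; destruct (Rlt_dec 0 0); [lra|]. destruct (Req_EM_T 0 0); [reflexivity|lra]. Qed.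

Lemma D_neg x : x < 0 -> Derive phi x = fX x.
Proof. intros; rewrite fX_neg by auto. apply is_derive_unique, dphi_nz; lra. Qed.
Lemma D_pos x : 0 < x -> Derive phi x = 2 * fX x.
Proof. intros; rewrite fX_pos by auto. rewrite (is_derive_unique _ _ _ (dphi_nz x ltac:(lra))). field.
  lra. Qed.
Lemma D_0 : Derive phi 0 = 0.
Proof. apply is_derive_unique, dphi_0. Qed.

Lemma fX_nz x : x <> 0 -> fX x <> 0.
Proof.
intros Hx. assert (Hp := exp_pos (- (1 / x ^ 2))). assert (x^3 <> 0) by (apply pow_nonzero; auto).
destruct (Rlt_dec x 0).
- rewrite fX_neg by auto. apply Rmult_integral_contrapositive_currified; [|lra].
  unfold Rdiv. apply Rmult_integral_contrapositive_currified; [lra|]. apply Rinv_neq_0_compat; auto.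
- rewrite fX_pos by lra. apply Rmult_integral_contrapositive_currified; [|lra].
  unfold Rdiv. apply Rmult_integral_contrapositive_currified; [lra|]. apply Rinv_neq_0_compat; auto.
Qed.

Theorem mainTheorem6 :
  (exists delta : R -> R,
      (forall x, continuous delta x) /\
      (forall x, 0 < delta x) /\
      (forall x, Derive phi x * fX x >= delta x * (fX x ^ 2 + Derive phi x ^ 2)))
  /\
  ~ (exists G : R -> R,
        smooth G /\
        (forall x v, v <> 0 -> tensor20 G x v v > 0) /\
        (forall x v, Derive phi x * v = tensor20 G x (fX x) v)).
Proof.
split.
- exists (fun _ => 1/4). split; [intros; apply continuous_const|]. split; [intros; lra|].
  intros x. destruct (Rlt_dec x 0) as [H|H].
  + rewrite D_neg by auto. nra.
  + destruct (Req_EM_T x 0) as [->|H'].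
    * rewrite D_0, fX_0. lra.
    * rewrite D_pos by lra. nra.
- intros [G [HG [_ Heq]]].
  assert (Hn : forall x, x < 0 -> G x = 1).
  { intros x Hx. specialize (Heq x 1). unfold tensor20 in Heq. rewrite D_neg in Heq by auto.
    assert (fX x <> 0) by (apply fX_nz; lra).
    apply (Rmult_eq_reg_r (fX x)); auto. nra. }
  assert (Hp : forall x, 0 < x -> G x = 2).
  { intros x Hx. specialize (Heq x 1). unfold tensor20 in Heq. rewrite D_pos in Heq by auto.
    assert (fX x <> 0) by (apply fX_nz; lra).
    apply (Rmult_eq_reg_r (fX x)); auto. nra. }
  assert (Hc : continuity_pt G 0).
  { apply continuity_pt_filterlim. apply (@ex_derive_continuous R_AbsRing R_NormedModule). exact (HG 1%nat 0). }
  destruct (Hc (1/2) ltac:(lra)) as [a [Ha Hb]].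
  assert (H1 := Hb (- (a/2)) ltac:(split; [split; [exact I|lra]| simpl; unfold R_dist; rewrite Rminus_0_r, Rabs_Ropp, Rabs_pos_eq; lra])).
  assert (H2 := Hb (a/2) ltac:(split; [split; [exact I|lra]| simpl; unfold R_dist; rewrite Rminus_0_r, Rabs_pos_eq; lra])).
  simpl in H1, H2. unfold R_dist in H1, H2.
  rewrite Hn in H1 by lra. rewrite Hp in H2 by lra.
  apply Rabs_def2 in H1. apply Rabs_def2 in H2. lra.
Qed.
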